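(* Let $X$ be a rational ruled surface, let $c_1=a(\sigma+f)$ with $a\in\{0,1\}$, and let $c_2$ be an integer with $3c_2-c_1^2>0$. Let $F$ be a divisor on $X$ and $\zeta=3F-c_1$, and suppose there exist ample divisors $L_1,L_2$ with $\zeta\cdot L_1<0<\zeta\cdot L_2$ and that $-4(3c_2-c_1^2)\le\zeta^2<0$. Define $$d_\zeta(c_1,c_2)=-\frac{3c_2-c_1^2}{3}+2+\frac{\zeta^2}{6}+\frac{K_X\cdot\zeta}{2}.$$ Then: (i) if $a=0$, then $d_\zeta(c_1,c_2)<0$; (ii) if $a=1$, then $d_\zeta(c_1,c_2)\le 0$, with equality if and only if either $\zeta\equiv 2\sigma-(3c_2-2)f$, or $e=0$ and $\zeta\equiv-(3c_2-2)\sigma+2f$.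
   Context: $X$ is a rational ruled surface with ruling $\pi:X\to\mathbb{P}^1$; $f$ is a fiber of $\pi$ and $\sigma$ is a section of $\pi$ with $\sigma^2$ minimal; $e=-\sigma^2\ge 0$. The Picard group of $X$ is generated by $\sigma$ and $f$, with $\sigma^2=-e$, $\sigma\cdot f=1$, $f^2=0$, and the canonical divisor is $K_X=-2\sigma-(2+e)f$. $\equiv$ denotes numerical equivalence. *)

(* Defs.v *)
From mathcomp Require Import all_boot all_order all_algebra.
Set Implicit Arguments. Unset Strict Implicit. Unset Printing Implicit Defensive.
Import Order.TTheory GRing.Theory Num.Theory.
Local Open Scope ring_scope.

(* The rational ruled surface X = F_e (e >= 0).  Its Picard group, which
   equals its Neron-Severi group (numerical equivalence = linear equivalence),
   is Z sigma + Z f.  A divisor class is represented by its coordinates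
   (x, y) meaning  x*sigma + y*f.  Numerical equivalence is equality of
   coordinates. *)
Definition divisor := (int * int)%type.

Definition Dsigma : divisor := (1, 0).
Definition Dfib : divisor := (0, 1).
Definition Dadd (D1 D2 : divisor) : divisor := (D1.1 + D2.1, D1.2 + D2.2).
Definition Dscale (n : int) (D : divisor) : divisor := (n * D.1, n * D.2).
Definition Dsub (D1 D2 : divisor) : divisor := Dadd D1 (Dscale (-1) D2).

(* intersection form: sigma^2 = -e, sigma.f = 1, f^2 = 0 *)
Definition intersect (e : nat) (D1 D2 : divisor) : int :=
  - (e%:Z) * (D1.1 * D2.1) + D1.1 * D2.2 + D1.2 * D2.1.

Definition KX (e : nat) : divisor := (-2, - (2 + e%:Z)).

(* ampleness on F_e (Hartshorne V.2.18 / V.2.20): x sigma + y f is ample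
   iff x > 0 and y > e x. *)
Definition ample (e : nat) (D : divisor) : Prop := 0 < D.1 /\ e%:Z * D.1 < D.2.

Definition c1_of (a : nat) : divisor := Dscale a%:Z (Dadd Dsigma Dfib).

Definition d_zeta (e : nat) (c1 : divisor) (c2 : int) (zeta : divisor) : rat :=
  - ((3 * c2 - intersect e c1 c1)%:~R) / 3 + 2
  + (intersect e zeta zeta)%:~R / 6 + (intersect e (KX e) zeta)%:~R / 2.

(* Main.v *)
Require Import Defs.
From mathcomp Require Import all_boot all_order all_algebra zify ring lra.
Import Order.TTheory GRing.Theory Num.Theory.
Local Open Scope ring_scope.

Lemma signs {e x y p1 q1 p2 q2 : int} : 0 <= e -> 0 < p1 -> e * p1 < q1 -> 0 < p2 -> e * p2 < q2 ->
  -e * (x * p1)+x * q1+y * p1 < 0 -> 0 < -e * (x * p2)+x * q2+y * p2 -> (0 < x /\ y < 0) \/ (x < 0 /\ 0 < y).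
Proof.
move=> he hp1 hq1 hp2 hq2 h1 h2.
have E1 : -e * (x * p1)+x * q1+y * p1 = x * (q1-e * p1)+y * p1 by ring.
have E2 : -e * (x * p2)+x * q2+y * p2 = x * (q2-e * p2)+y * p2 by ring.
rewrite E1 in h1; rewrite E2 in h2.
have hr1 : 0 < q1 - e * p1 by lia. have hr2 : 0 < q2 - e * p2 by lia.
move: (q1-e * p1) (q2-e * p2) hr1 hr2 h1 h2 => r1 r2 hr1' hr2' h1 h2.
case: (ltrgtP x 0) => hx; case: (ltrgtP y 0) => hy; try lia.
all: first [ by left | by right | idtac ].
all: try (have : x * r2 < 0 by rewrite pmulr_rlt0); try (have : y * p2 < 0 by rewrite pmulr_rlt0);
  try (have : 0 < x * r1 by rewrite pmulr_rgt0); try (have : 0 < y * p1 by rewrite pmulr_rgt0);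
  try (rewrite hx in h1 h2); try (rewrite hy in h1 h2); lia.
Qed.

Lemma core0 {e u v N : int} : 0 <= e ->
  forall x y, x = 3 * u -> y = 3 * v ->
  (0 < x /\ y < 0) \/ (x < 0 /\ 0 < y) ->
  -4 * N <= -e * (x * x)+x * y+y * x ->
  -2 * N + 12 + (-e * (x * x)+x * y+y * x) + 3 * (-e * (-2 * x) + -2 * y + -(2+e) * x) < 0.
Proof.
move=> he x y hx0 hy0 hs hN; subst x y; case: hs => [[hx hy]|[hx hy]].
- have h1 : 0 <= e  *  (3 * u)  *  (3 * u-2) by nia.
  have h2 : 0 < (-2 * (3 * v)+4)  *  (3 * u-2) by nia.
  nia.
- have h1 : 0 <= e  *  (-3 * u)  *  (-3 * u+2) by nia.
  have h2 : 0 < (-2 * (3 * u)+4)  *  (3 * v-2) by nia.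
  nia.
Qed.

Lemma core1 {e u v c2 N : int} : 0 <= e -> N = 3 * c2 + e - 2 ->
  forall x y, x = 3 * u - 1 -> y = 3 * v - 1 ->
  (0 < x /\ y < 0) \/ (x < 0 /\ 0 < y) ->
  -4 * N <= -e * (x * x)+x * y+y * x ->
  let D := -2 * N + 12 + (-e * (x * x)+x * y+y * x) + 3 * (-e * (-2 * x) + -2 * y + -(2+e) * x) in
  D <= 0 /\ (D = 0 <-> (x = 2 /\ y = - (3 * c2 - 2)) \/ (e = 0 /\ x = - (3 * c2 - 2) /\ y = 2)).
Proof.
move=> he hN x y hx0 hy0 hs hz D; subst x y; rewrite /D in hs hz *.
have back : (3 * u - 1 = 2 /\ 3 * v - 1 = - (3 * c2 - 2)) \/ (e = 0 /\ 3 * u - 1 = - (3 * c2 - 2) /\ 3 * v - 1 = 2) -> D = 0.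
  rewrite /D hN => -[[h1 h2]|[h0 [h1 h2]]].
  - have -> : u = 1 by lia. have -> : v = 1 - c2 by lia. ring.
  - have -> : u = 1 - c2 by lia. have -> : v = 1 by lia. rewrite h0; ring.
rewrite /D in back.
case: hs => [[hx hy]|[hx hy]].
- have [hu|hu] : u = 1 \/ 2 <= u by lia.
  + subst u. split; first lia. split => [h|]; last exact: back.
    left; lia.
  + have h1 : 0 <= e * (3 * u - 1) * (3 * u - 3) by nia.
    have h2 : 0 < (-2 * (3 * v - 1)+4) * (3 * u - 3) by nia.
    have hlt : -2 * N + 12 + (-e * ((3 * u - 1) * (3 * u - 1))+(3 * u - 1) * (3 * v - 1)+(3 * v - 1) * (3 * u - 1)) + 3 * (-e * (-2 * (3 * u - 1)) + -2 * (3 * v - 1) + -(2+e) * (3 * u - 1)) < 0 by nia.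
    split; first lia. split => [h|]; first lia.
    move=> [[h3 h4]|[h3 [h4 h5]]]; lia.
- have [hv|hv] : v = 1 \/ 2 <= v by lia.
  + subst v. have hn : 0 < (1 - 3 * u) * (3 - 3 * u) by nia.
    have h1 : 0 <= e * ((1 - 3 * u) * (3 - 3 * u)) by nia.
    split; first nia. split => [h|]; last exact: back.
    have he0 : e = 0.
      have : e * ((1 - 3 * u) * (3 - 3 * u)) <= 0 by nia.
      nia.
    subst e. right; lia.
  + have h1 : 0 <= e * (1 - 3 * u) * (3 - 3 * u) by nia.
    have h2 : 0 < (-2 * (3 * u - 1)+4) * (3 * v - 3) by nia.
    have hlt : -2 * N + 12 + (-e * ((3 * u - 1) * (3 * u - 1))+(3 * u - 1) * (3 * v - 1)+(3 * v - 1) * (3 * u - 1)) + 3 * (-e * (-2 * (3 * u - 1)) + -2 * (3 * v - 1) + -(2+e) * (3 * u - 1)) < 0 by nia.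
    split; first lia. split => [h|]; first lia.
    move=> [[h3 h4]|[h3 [h4 h5]]]; lia.
Qed.

Lemma dform e c1 c2 z : d_zeta e c1 c2 z = (- 2 * (3 * c2 - intersect e c1 c1) + 12 + intersect e z z + 3 * intersect e (KX e) z)%:~R / 6.
Proof. rewrite /d_zeta !(intrD, intrM, intrN). by field. Qed.

Lemma eq0r (D : int) : ((D%:~R / 6 : rat) = 0) <-> D = 0.
Proof.
split => [/eqP|->]; last by rewrite mul0r.
by rewrite mulf_eq0 intr_eq0 invr_eq0 orbF => /eqP.
Qed.

Theorem lemma2p6 (e : nat) (a : nat) (c2 : int) (F : divisor) :
  (a <= 1)%N ->
  0 < 3 * c2 - intersect e (c1_of a) (c1_of a) ->
  let zeta := Dsub (Dscale 3 F) (c1_of a) in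
  (exists L1 L2 : divisor, ample e L1 /\ ample e L2 /\
     intersect e zeta L1 < 0 /\ 0 < intersect e zeta L2) ->
  - 4 * (3 * c2 - intersect e (c1_of a) (c1_of a)) <= intersect e zeta zeta ->
  intersect e zeta zeta < 0 ->
  (a = 0%N -> d_zeta e (c1_of a) c2 zeta < 0) /\
  (a = 1%N ->
     d_zeta e (c1_of a) c2 zeta <= 0 /\
     (d_zeta e (c1_of a) c2 zeta = 0 <->
        (zeta = (2, - (3 * c2 - 2)) \/
         (e = 0%N /\ zeta = (- (3 * c2 - 2), 2))))).
Proof.
move=> ha; case: F => F1 F2; have [->|->] : a = 0%N \/ a = 1%N by lia.
all: move=> hpos; cbv zeta; move=> [[p1 q1] [[p2 q2] [hA1 [hA2 [h1 h2]]]]] hlo hneg.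
all: rewrite dform.
all: move: hA1 hA2 h1 h2 hlo hneg hpos; rewrite /ample /intersect /c1_of /KX /Dsub /Dadd /Dscale /Dsigma /Dfib /=.
all: move=> [hp1 hq1] [hp2 hq2] h1 h2 hlo hneg hpos.
all: have he : 0 <= e%:Z by [].
- have hs := signs he hp1 hq1 hp2 hq2 h1 h2.
  split => // _. rewrite pmulr_llt0 // ltrz0.
  have hx : 3 * F1 + -1 * (0%:Z * (1 + 0)) = 3 * F1 by ring.
  have hy : 3 * F2 + -1 * (0%:Z * (0 + 1)) = 3 * F2 by ring.
  have := core0 he _ _ hx hy hs hlo.
  move=> H; lia.
- have hs := signs he hp1 hq1 hp2 hq2 h1 h2.
  have hx : 3 * F1 + -1 * (1%:Z * (1 + 0)) = 3 * F1 - 1 by ring.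
  have hy : 3 * F2 + -1 * (1%:Z * (0 + 1)) = 3 * F2 - 1 by ring.
  have hN : 3 * c2 - (- e%:Z * (1%:Z * (1 + 0) * (1%:Z * (1 + 0))) + 1%:Z * (1 + 0) * (1%:Z * (0 + 1)) + 1%:Z * (0 + 1) * (1%:Z * (1 + 0))) = 3 * c2 + e - 2 by ring.
  have [hle heq] := core1 he hN _ _ hx hy hs hlo.
  split => // _. rewrite pmulr_lle0 // lerz0. split; first lia.
  rewrite eq0r; split => [/heq H|H]; last apply/heq.
  + case: H => [[-> ->]|[he0 [-> ->]]]; [left | right] => //. split => //. lia.
  + case: H => [[[-> ->]]|[he0 [[-> ->]]]]; [left | right] => //. split => //. lia.
Qed.
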